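(* Fix $W>0$, $N_0>0$, dual variables $\mu\ge0$, $\lambda\ge0$, and complex numbers $H_{\rm SD},H_{\rm SR},H_{\rm RD}$. Consider the problem $$\max_{P\ge0,\ \bar\Xi\ge0}\ \frac{1}{2W}\log_2\left(1+\frac{\left(|H_{\rm SD}|+|H_{\rm RD}H_{\rm SR}|\bar\Xi\right)^2P}{\left(|H_{\rm RD}|^2\bar\Xi^2+1\right)N_0}\right)-\mu P-\lambda\bar\Xi^2|H_{\rm SR}|^2P.$$ Define $$\beta(\bar\Xi)=\frac{\left(|H_{\rm SD}|+|H_{\rm RD}H_{\rm SR}|\bar\Xi\right)^2}{\left(\mu+\lambda\bar\Xi^2|H_{\rm SR}|^2\right)\left(|H_{\rm RD}|^2\bar\Xi^2+1\right)N_0},$$ $$\chi(\bar\Xi)=\left(\frac{1}{(2\ln2)W(\mu+\lambda\bar\Xi^2|H_{\rm SR}|^2)}-\frac{\left(|H_{\rm RD}|^2\bar\Xi^2+1\right)N_0}{\left(|H_{\rm SD}|+|H_{\rm RD}H_{\rm SR}|\bar\Xi\right)^2}\right)^+,$$ where $x^+=\max(x,0)$. Then an optimal solution $(P^\star,\bar\Xi^\star)$ of the problem is given by $$\bar\Xi^\star=\begin{cases}\arg\max_{\bar\Xi\ge0}\beta(\bar\Xi), & \text{if } \max_{\bar\Xi\ge0}\beta(\bar\Xi)>(2\ln2)W,\\ 0, & \text{otherwise},\end{cases}\qquad P^\star=\chi(\bar\Xi^\star).$$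
   Context: This is the per-frequency subproblem arising from the Lagrangian of the rate maximization for a full-duplex filter-and-forward relay channel, where $P$ is the source power spectral density at a given frequency, $\bar\Xi$ is the amplitude of the relay's effective filter gain at that frequency, $H_{\rm SD},H_{\rm SR},H_{\rm RD}$ are the source–destination, source–relay and relay–destination channel frequency responses at that frequency, and $\mu,\lambda$ are the Lagrange multipliers of the source and relay power constraints. *)

(* Defs.v *)
From HB Require Import structures.
From mathcomp Require Import all_boot all_order all_algebra.
From mathcomp Require Import reals exp.
From mathcomp Require Import complex.
Set Implicit Arguments. Unset Strict Implicit. Unset Printing Implicit Defensive.
Import Order.TTheory GRing.Theory Num.Theory.
Local Open Scope ring_scope.
Local Open Scope complex_scope.

Section FD.
Variable R : realType.

Definition log2 (x : R) : R := ln x / ln 2.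

Definition cabs (z : R[i]) : R := ComplexField.Normc.normc z.

Definition fd_num (Hsd Hsr Hrd : R[i]) (Xi : R) : R :=
  (cabs Hsd + cabs (Hrd * Hsr) * Xi) ^+ 2.

Definition fd_den (N0 : R) (Hrd : R[i]) (Xi : R) : R :=
  (cabs Hrd ^+ 2 * Xi ^+ 2 + 1) * N0.

Definition fd_price (mu lambda : R) (Hsr : R[i]) (Xi : R) : R :=
  mu + lambda * Xi ^+ 2 * cabs Hsr ^+ 2.

Definition fd_obj (W N0 mu lambda : R) (Hsd Hsr Hrd : R[i]) (P Xi : R) : R :=
  (2 * W)^-1 * log2 (1 + fd_num Hsd Hsr Hrd Xi * P / fd_den N0 Hrd Xi)
  - mu * P - lambda * Xi ^+ 2 * cabs Hsr ^+ 2 * P.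

Definition fd_beta (N0 mu lambda : R) (Hsd Hsr Hrd : R[i]) (Xi : R) : R :=
  fd_num Hsd Hsr Hrd Xi /
  (fd_price mu lambda Hsr Xi * fd_den N0 Hrd Xi).

(* chi(Xi) = ( 1/((2 ln 2) W c(Xi)) - b(Xi)/a(Xi) )^+ ; when a(Xi) = 0 the
   subtracted term is +oo and the positive part is 0 (made explicit). *)
Definition fd_chi (W N0 mu lambda : R) (Hsd Hsr Hrd : R[i]) (Xi : R) : R :=
  if fd_num Hsd Hsr Hrd Xi == 0 then 0 else
  Num.max ((2 * ln 2 * W * fd_price mu lambda Hsr Xi)^-1
           - fd_den N0 Hrd Xi / fd_num Hsd Hsr Hrd Xi) 0.

Definition fd_optimal (W N0 mu lambda : R) (Hsd Hsr Hrd : R[i]) (P Xi : R) :=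
  [/\ 0 <= P, 0 <= Xi &
      forall P' Xi', 0 <= P' -> 0 <= Xi' ->
        fd_obj W N0 mu lambda Hsd Hsr Hrd P' Xi'
        <= fd_obj W N0 mu lambda Hsd Hsr Hrd P Xi].

End FD.

(* Main.v *)
Require Import Defs.
From HB Require Import structures.
From mathcomp Require Import all_boot all_order all_algebra.
From mathcomp Require Import reals exp.
From mathcomp Require Import complex.
From mathcomp Require Import ring lra.
Import Order.TTheory GRing.Theory Num.Theory.
Local Open Scope ring_scope.

Section S.
Variable R : realType.

Lemma lnle (z : R) : 0 < z -> ln z <= z - 1.
Proof.
move=> z0; have := expR_ge1Dx (ln z); rewrite lnK ?posrE //; lra.
Qed.

Lemma core (a b c k y P : R) : 0 <= a -> 0 < b -> 0 < c -> 0 < k -> 1 <= y ->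
  a / (c * b) <= k * y -> 0 <= P ->
  ln (1 + a * P / b) / k - c * P <= (ln y + y^-1 - 1) / k.
Proof.
move=> a0 b0 c0 k0 y1 hb P0.
have y0 : 0 < y by lra.
have x0 : 0 < 1 + a * P / b by have := divr_ge0 (mulr_ge0 a0 P0) (ltW b0); lra.
have H1 : ln (1 + a * P / b) - ln y <= (1 + a * P / b) / y - 1.
  by rewrite -ln_div ?posrE // lnle // divr_gt0.
have H2 : (1 + a * P / b) / y = y^-1 + a / (b * y) * P.
  by field; rewrite !gt_eqF.
have H3 : a / (b * y) <= k * c.
  rewrite ler_pdivrMr ?mulr_gt0 //.
  move: hb; rewrite ler_pdivrMr ?mulr_gt0 // => hb.
  by rewrite (le_trans hb) // le_eqVlt; apply/orP; left; apply/eqP; ring.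
have H4 : a / (b * y) * P <= k * c * P by rewrite ler_wpM2r.
have H5 : ln (1 + a * P / b) - k * c * P <= ln y + y^-1 - 1 by lra.
have ik : 0 < k^-1 by rewrite invr_gt0.
have -> : c * P = (k * c * P) * k^-1 by field; rewrite gt_eqF.
rewrite -mulrBl; by rewrite ler_wpM2r // ltW.
Qed.

Lemma hmono (y T : R) : 1 <= y -> y <= T -> ln y + y^-1 - 1 <= ln T + T^-1 - 1.
Proof.
move=> y1 yT.
have y0 : 0 < y by lra.
have T0 : 0 < T by lra.
have H1 : ln y - ln T <= y / T - 1 by rewrite -ln_div ?posrE // lnle // divr_gt0.
have E1 : y^-1 - T^-1 = (T - y) * T^-1 * y^-1 by field; rewrite !gt_eqF.
have E2 : 1 - y / T = (T - y) * T^-1 by field; rewrite !gt_eqF.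
have H2 : (T - y) * T^-1 * y^-1 <= (T - y) * T^-1.
  have Hy : y^-1 <= 1 by rewrite invf_le1.
  rewrite -[X in _ <= X]mulr1; apply: ler_wpM2l => //.
  by rewrite mulr_ge0 ?invr_ge0 ?subr_ge0 // ltW.
lra.
Qed.


Lemma objE (W N0 mu lambda : R) (Hsd Hsr Hrd : R[i]) P Xi : 0 < W ->
  fd_obj W N0 mu lambda Hsd Hsr Hrd P Xi =
  ln (1 + fd_num Hsd Hsr Hrd Xi * P / fd_den N0 Hrd Xi) / (2 * ln 2 * W)
  - fd_price mu lambda Hsr Xi * P.
Proof.
move=> W0; have l2 : 0 < ln (2:R) by apply: ln_gt0; lra.
rewrite /fd_obj /fd_price /log2; field.
by rewrite !gt_eqF.
Qed.

Lemma bound (W N0 mu lambda : R) (Hsd Hsr Hrd : R[i]) P Xi y :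
  0 < W -> 0 < N0 -> 0 < mu -> 0 <= lambda -> 0 <= P -> 1 <= y ->
  fd_beta N0 mu lambda Hsd Hsr Hrd Xi <= 2 * ln 2 * W * y ->
  fd_obj W N0 mu lambda Hsd Hsr Hrd P Xi <= (ln y + y^-1 - 1) / (2 * ln 2 * W).
Proof.
move=> W0 N00 mu0 la0 P0 y1 hb.
have l2 : 0 < ln (2:R) by apply: ln_gt0; lra.
rewrite objE //; apply: core => //.
- exact: sqr_ge0.
- rewrite /fd_den mulr_gt0 //; have := sqr_ge0 (cabs Hrd); have := sqr_ge0 Xi; nra.
- rewrite /fd_price; have := mulr_ge0 (mulr_ge0 la0 (sqr_ge0 Xi)) (sqr_ge0 (cabs Hsr)); lra.
- by rewrite !mulr_gt0.
Qed.

End S.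

Theorem mainTheorem4 (R : realType) (W N0 mu lambda : R) (Hsd Hsr Hrd : R[i]) :
  0 < W -> 0 < N0 -> 0 < mu -> 0 <= lambda ->
  (forall Xs : R, 0 <= Xs ->
     (forall Xi : R, 0 <= Xi ->
        fd_beta N0 mu lambda Hsd Hsr Hrd Xi <= fd_beta N0 mu lambda Hsd Hsr Hrd Xs) ->
     fd_beta N0 mu lambda Hsd Hsr Hrd Xs > 2 * ln 2 * W ->
     fd_optimal W N0 mu lambda Hsd Hsr Hrd
       (fd_chi W N0 mu lambda Hsd Hsr Hrd Xs) Xs) /\
  ((forall Xi : R, 0 <= Xi -> fd_beta N0 mu lambda Hsd Hsr Hrd Xi <= 2 * ln 2 * W) ->
     fd_optimal W N0 mu lambda Hsd Hsr Hrd
       (fd_chi W N0 mu lambda Hsd Hsr Hrd 0) 0).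
Proof.
move=> W0 N00 mu0 la0.
have l2 : 0 < ln (2:R) by apply: ln_gt0; lra.
set k := 2 * ln 2 * W.
have k0 : 0 < k by rewrite !mulr_gt0.
have bpos : forall Xi, 0 < fd_den N0 Hrd Xi.
  move=> Xi; rewrite /fd_den mulr_gt0 //; have := sqr_ge0 (cabs Hrd); have := sqr_ge0 Xi; nra.
have cpos : forall Xi, 0 < fd_price mu lambda Hsr Xi.
  move=> Xi; rewrite /fd_price; have := mulr_ge0 (mulr_ge0 la0 (sqr_ge0 Xi)) (sqr_ge0 (cabs Hsr)); lra.
have chi0 : forall Xi, 0 <= fd_chi W N0 mu lambda Hsd Hsr Hrd Xi.
  by move=> Xi; rewrite /fd_chi; case: ifP => // _; rewrite le_max lexx orbT.
split.
- move=> Xs Xs0 hmax hgt; split => // P' Xi' P0 Xi0.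
  set a := fd_num Hsd Hsr Hrd Xs.
  set b := fd_den N0 Hrd Xs.
  set c := fd_price mu lambda Hsr Xs.
  have b0 := bpos Xs; have c0 := cpos Xs.
  have hbeta : fd_beta N0 mu lambda Hsd Hsr Hrd Xs = a / (c * b) by [].
  have a0 : a != 0.
    apply/negP => /eqP a0; move: hgt; rewrite hbeta a0 mul0r => hgt; lra.
  set T := fd_beta N0 mu lambda Hsd Hsr Hrd Xs / k.
  have T1 : 1 < T by rewrite /T ltr_pdivlMr // mul1r.
  apply: (@le_trans _ _ ((ln T + T^-1 - 1) / k)).
    apply: (@le_trans _ _ ((ln (Num.max (fd_beta N0 mu lambda Hsd Hsr Hrd Xi' / k) 1)
       + (Num.max (fd_beta N0 mu lambda Hsd Hsr Hrd Xi' / k) 1)^-1 - 1) / k)).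
      apply: bound => //; first by rewrite le_max lexx orbT.
      rewrite -/k -ler_pdivrMl // le_max; apply/orP; left; rewrite mulrC.
      by [].
    apply: ler_wpM2r; first by rewrite invr_ge0 ltW.
    apply: hmono.
      by rewrite le_max lexx orbT.
    rewrite ge_max (ltW T1) andbT /T; apply: ler_wpM2r; first by rewrite invr_ge0 ltW.
    exact: hmax.
  have ha : 0 < a by rewrite lt_def a0 /a /fd_num sqr_ge0.
  have hpos : 0 < k^-1 * c^-1 - b / a.
    move: hgt; rewrite hbeta ltr_pdivlMr ?(mulr_gt0 c0 b0) // => hgt.
    have -> : k^-1 * c^-1 - b / a = (a - k * (c * b)) / (k * c * a).
      by field; rewrite !gt_eqF.
    apply: divr_gt0; first by rewrite subr_gt0.
    by apply: mulr_gt0 => //; apply: mulr_gt0.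
  rewrite /fd_chi -/a (negbTE a0) objE // -/a -/b -/c -/k.
  have -> : Num.max ((k * c)^-1 - b / a) 0 = k^-1 * c^-1 - b / a.
    by rewrite invfM; apply/max_idPl; apply: ltW.
  have -> : 1 + a * (k^-1 * c^-1 - b / a) / b = T.
    rewrite /T hbeta /fd_beta; field; rewrite !gt_eqF //.
  rewrite le_eqVlt; apply/orP; left; apply/eqP.
  rewrite /T hbeta; field; rewrite !gt_eqF // ?mulr_gt0 ?divr_gt0 //.
- move=> hle; split; [exact: chi0 | exact: lexx | ].
  move=> P' Xi' P0 Xi0.
  apply: (@le_trans _ _ ((ln 1 + 1^-1 - 1) / k)).
    apply: bound => //; by rewrite mulr1 hle.
  have -> : fd_chi W N0 mu lambda Hsd Hsr Hrd 0 = 0.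
    rewrite /fd_chi; case: ifP => // /negbT a0.
    apply/max_idPr.
    set a := fd_num Hsd Hsr Hrd 0.
    set b := fd_den N0 Hrd 0.
    set c := fd_price mu lambda Hsr 0.
    have b0 := bpos 0; have c0 := cpos 0.
    have ha : 0 < a by rewrite lt_def a0 /a /fd_num sqr_ge0.
    have hb : a / (c * b) <= k by exact: hle.
    move: hb; rewrite ler_pdivrMr ?(mulr_gt0 c0 b0) // => hb.
    have -> : (2 * ln 2 * W * c)^-1 - b / a = (a - k * (c * b)) / (k * c * a).
      by rewrite /k; field; rewrite !gt_eqF.
    apply: mulr_le0_ge0; first by rewrite subr_le0.
    by rewrite invr_ge0 ltW //; apply: mulr_gt0 => //; apply: mulr_gt0.
  rewrite objE // !mulr0 mul0r addr0 ln1 invr1. Show.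
  by rewrite add0r subrr !mul0r subr0.
Qed.
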